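(* Let $(G,f)\in\mathcal C$ with $|V(G)|=\aleph_1$. If $P$ is a hereditary property such that $P(G,f)$ holds and $(G,f)$ is not $P$-destructed, then $G$ possesses a perfect $f$-factor.
   Context: A graph is $G=(V,E)$ with $V$ a nonempty set and $E\subseteq\{e\subseteq V:|e|=2\}$. For $F\subseteq E$ and $x\in V$, $d_F(x)$ is the cardinal $|\{e\in F:x\in e\}|$. For $f:V\to$ Cardinals, an $f$-factor of $G$ is $F\subseteq E$ with $d_F(x)\le f(x)$ for all $x$; it is perfect if $d_F(x)=f(x)$ for all $x$; $f^{-1}(\lambda)=\{x\in V:f(x)=\lambda\}$. $\mathcal C$ is the class of all pairs $(G,f)$ with $G=(V,E)$ a graph, $f:V\to$ Cardinals, and $f(x)\le d_E(x)$ for all $x\in V$. A property $P$ is a class of pairs; $P(G,f)$ (also ''$(G,f)$ fulfills $P$'') means that $(G,f)\in\mathcal C$ and $(G,f)$ has property $P$. For $x,y\in V$, $G-\{x,y\}$ denotes $(V,E\setminus\{\{x,y\}\})$, and $f_{x,y}(v)=f(v)-1$ if $v\in\{x,y\}$ and $1\le f(v)<\aleph_0$, $f_{x,y}(v)=f(v)$ otherwise. $P$ is hereditary if for every $(G,f)$ with $P(G,f)$ and every $x\in V(G)$ with $f(x)>0$ there is $y\in V(G)$ with $f(y)>0$, $\{x,y\}\in E(G)$ and $P(G-\{x,y\},f_{x,y})$. Destructions: let $(G,f)\in\mathcal C$, $G=(V,E)$, $|V|=\kappa^+$ for an infinite cardinal $\kappa$. Let $(A_\alpha)_{\alpha<\kappa^+}$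 be an increasing continuous sequence (i.e. $A_\lambda=\bigcup_{\alpha<\lambda}A_\alpha$ for limit $\lambda$) of subsets of $V$ with $|A_\alpha|<\kappa^+$ for all $\alpha$ and $V=\bigcup_{\alpha<\kappa^+}A_\alpha$. For $\alpha<\kappa^+$ put $V_\alpha=(V\setminus A_\alpha)\cup f^{-1}(\kappa^+)$, $E_\alpha=\{\{x,y\}\in E: x\in V_\alpha,\ y\in V\setminus A_\alpha\}$, $G_\alpha=(V_\alpha,E_\alpha)$, $f_\alpha=f\restriction V_\alpha$. For a property $P$, $(A_\alpha)_{\alpha<\kappa^+}$ is a $P$-destruction of $(G,f)$ if $S=\{\alpha<\kappa^+: P(G_\alpha,f_\alpha)\text{ fails}\}$ is stationary in $\kappa^+$; $(G,f)$ is $P$-destructed if some such sequence is a $P$-destruction of $(G,f)$. *)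

(* Defs.v *)
From HB Require Import structures.
From mathcomp Require Import all_boot all_order.
From mathcomp Require Import boolp classical_sets functions cardinality.
From Stdlib Require Import Relations Wellfounded.

Set Implicit Arguments. Unset Strict Implicit. Unset Printing Implicit Defensive.

Local Open Scope classical_set_scope.
Local Open Scope card_scope.

(** Cardinals that can occur: f(x) <= d_E(x) <= |V| = aleph_1. *)
Inductive cardv := CFin of nat | CAleph0 | CAleph1.

Definition omega1_order (I : Type) (lt : I -> I -> Prop) : Prop :=
  [/\ (forall a, ~ lt a a),
      (forall a b c, lt a b -> lt b c -> lt a c),
      (forall a b, lt a b \/ a = b \/ lt b a) &
      well_founded lt] /\
  (~ countable [set: I] /\ forall i, countable [set j | lt j i]).

Definition has_card (T : Type) (S : set T) (c : cardv) : Prop :=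
  match c with
  | CFin n => S #= `I_n
  | CAleph0 => S #= [set: nat]
  | CAleph1 => exists (I : Type) (lt : I -> I -> Prop),
                 omega1_order lt /\ S #= [set: I]
  end.

Definition card_le_set (c : cardv) (T : Type) (S : set T) : Prop :=
  exists (U : Type) (W : set U), has_card W c /\ W #<= S.

Definition set_le_card (T : Type) (S : set T) (c : cardv) : Prop :=
  exists (U : Type) (W : set U), has_card W c /\ S #<= W.

Definition is_limit (I : Type) (lt : I -> I -> Prop) (l : I) : Prop :=
  (exists j, lt j l) /\ forall j, lt j l -> exists k, lt j k /\ lt k l.

Definition club (I : Type) (lt : I -> I -> Prop) (C : set I) : Prop :=
  (forall i, exists j, lt i j /\ C j) /\
  (forall l, is_limit lt l ->
     (forall j, lt j l -> exists k, [/\ lt j k, lt k l & C k]) -> C l).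

Definition stationary (I : Type) (lt : I -> I -> Prop) (S : set I) : Prop :=
  forall C, club lt C -> exists a, C a /\ S a.

Section Graphs.
Variable V : Type.

Definition is_graph (Vs : set V) (E : set (set V)) : Prop :=
  Vs !=set0 /\
  forall e, E e -> exists x y, [/\ Vs x, Vs y, x <> y & e = [set x; y]].

Definition deg (F : set (set V)) (x : V) : set (set V) := [set e | F e /\ e x].

Definition inC (Vs : set V) (E : set (set V)) (f : V -> cardv) : Prop :=
  is_graph Vs E /\ forall x, Vs x -> card_le_set (f x) (deg E x).

Definition is_property (P : set V -> set (set V) -> (V -> cardv) -> Prop) :=
  forall Vs E f g, (forall x, Vs x -> f x = g x) -> P Vs E f -> P Vs E g.

Definition holds (P : set V -> set (set V) -> (V -> cardv) -> Prop)
  (Vs : set V) (E : set (set V)) (f : V -> cardv) : Prop :=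
  inC Vs E f /\ P Vs E f.

Definition card_pos (c : cardv) : Prop := c <> CFin 0.

Definition fxy (f : V -> cardv) (x y : V) : V -> cardv :=
  fun v => if `[< v = x \/ v = y >] then
             match f v with CFin n.+1 => CFin n | c => c end
           else f v.

Definition hereditary (P : set V -> set (set V) -> (V -> cardv) -> Prop) :=
  forall Vs E f, holds P Vs E f ->
  forall x, Vs x -> card_pos (f x) ->
  exists y, [/\ Vs y, card_pos (f y), E [set x; y] &
                holds P Vs (E `\ [set x; y]) (fxy f x y)].

Definition f_factor (Vs : set V) (E : set (set V)) (f : V -> cardv)
  (F : set (set V)) : Prop :=
  F `<=` E /\ forall x, Vs x -> set_le_card (deg F x) (f x).

Definition perfect_f_factor (Vs : set V) (E : set (set V)) (f : V -> cardv)
  (F : set (set V)) : Prop :=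
  f_factor Vs E f F /\ forall x, Vs x -> has_card (deg F x) (f x).

(** Destructions, specialised to kappa = aleph_0, kappa^+ = aleph_1
    (the only case with |V| = aleph_1). The sequence is indexed by an
    omega_1-order (I, lt). *)
Definition filtration (Vs : set V) (I : Type) (lt : I -> I -> Prop)
  (A : I -> set V) : Prop :=
  [/\ (forall a, A a `<=` Vs),
      (forall a b, lt a b -> A a `<=` A b),
      (forall l, is_limit lt l -> A l = \bigcup_(a in [set a | lt a l]) A a),
      (forall a, countable (A a)) &
      Vs = \bigcup_(a in [set: I]) A a].

Definition V_alpha (Vs : set V) (f : V -> cardv) (Aa : set V) : set V :=
  (Vs `\` Aa) `|` (Vs `&` [set x | f x = CAleph1]).

Definition E_alpha (Vs : set V) (E : set (set V)) (f : V -> cardv)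
  (Aa : set V) : set (set V) :=
  [set e | E e /\ exists x y,
     [/\ e = [set x; y], V_alpha Vs f Aa x & (Vs `\` Aa) y]].

Definition is_destruction (P : set V -> set (set V) -> (V -> cardv) -> Prop)
  (Vs : set V) (E : set (set V)) (f : V -> cardv)
  (I : Type) (lt : I -> I -> Prop) (A : I -> set V) : Prop :=
  filtration Vs lt A /\
  stationary lt [set a | ~ holds P (V_alpha Vs f (A a)) (E_alpha Vs E f (A a)) f].

Definition destructed (P : set V -> set (set V) -> (V -> cardv) -> Prop)
  (Vs : set V) (E : set (set V)) (f : V -> cardv) : Prop :=
  exists (I : Type) (lt : I -> I -> Prop) (A : I -> set V),
    omega1_order lt /\ is_destruction P Vs E f lt A.

End Graphs.

(* Main.v *)
Require Import Defs.
From mathcomp Require Import all_boot all_order.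
From mathcomp Require Import boolp classical_sets functions cardinality.
From Stdlib Require Import Relations Wellfounded Cantor Lia.
From mathcomp Require Import zify.

Set Implicit Arguments. Unset Strict Implicit. Unset Printing Implicit Defensive.
Local Open Scope classical_set_scope.
Local Open Scope card_scope.
Lemma countableU T (A B : set T) : countable A -> countable B -> countable (A `|` B).
Proof.
move=> cA cB.
have -> : A `|` B = \bigcup_(b in [set: bool]) (if b then A else B).
  apply/seteqP; split=> x.
    by case=> h; [exists true|exists false].
  by case=> -[] _ h; [left|right].
apply: bigcup_countable => // -[] _ //.
Qed.

Lemma countable_image T U (f : T -> U) (A : set T) : countable A -> countable (f @` A).
Proof. by move=> cA; apply: sub_countable cA; apply: card_image_le. Qed.

Lemma countable_sub T (A B : set T) : A `<=` B -> countable B -> countable A.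
Proof. by move=> AB; apply: sub_countable; apply: subset_card_le. Qed.

Section Ord.
Variables (I : Type) (lt : I -> I -> Prop).
Hypothesis Hlt : omega1_order lt.

Definition le a b := lt a b \/ a = b.

Lemma lt_irr a : ~ lt a a. Proof. by case: Hlt => -[h _ _ _] _; apply: h. Qed.
Lemma lt_trans a b c : lt a b -> lt b c -> lt a c. Proof. by case: Hlt => -[_ h _ _] _; apply: h. Qed.
Lemma lt_total a b : lt a b \/ a = b \/ lt b a. Proof. by case: Hlt => -[_ _ h _] _; apply: h. Qed.
Lemma lt_wf : well_founded lt. Proof. by case: Hlt => -[_ _ _ h] _. Qed.
Lemma I_uncount : ~ countable [set: I]. Proof. by case: Hlt => _ [h _]. Qed.
Lemma seg_count i : countable [set j | lt j i]. Proof. by case: Hlt => _ [_ h]; apply: h. Qed.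

Lemma lt_asym a b : lt a b -> ~ lt b a.
Proof. by move=> h1 h2; apply: (@lt_irr a); apply: lt_trans h1 h2. Qed.

Lemma le_lt_trans a b c : le a b -> lt b c -> lt a c.
Proof. by case=> [h|->] //; apply: lt_trans. Qed.
Lemma lt_le_trans a b c : lt a b -> le b c -> lt a c.
Proof. by move=> h [h'|<-] //; apply: lt_trans h h'. Qed.
Lemma le_trans a b c : le a b -> le b c -> le a c.
Proof. by move=> h [h'|<-] //; left; apply: le_lt_trans h h'. Qed.
Lemma le_refl a : le a a. Proof. by right. Qed.
Lemma not_lt_le a b : ~ lt a b -> le b a.
Proof. by move=> h; case: (lt_total a b) => [//|[->|]]; [right|left]. Qed.
Lemma lt_not_le a b : lt a b -> ~ le b a.
Proof. by move=> h [h'|e]; [apply: lt_asym h h'|subst; apply: lt_irr h]. Qed.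

Lemma ord_bounded (X : set I) : countable X -> exists i, forall x, X x -> lt x i.
Proof.
move=> cX.
pose Y := \bigcup_(x in X) ([set j | lt j x] `|` [set x]).
have cY : countable Y.
  by apply: bigcup_countable => // x _; apply: countableU; [apply: seg_count|apply: countable1].
have [i Yi] : exists i, ~ Y i.
  apply: contrapT => h; apply: I_uncount; apply: countable_sub cY => i _.
  by apply: contrapT => ?; apply: h; exists i.
exists i => x Xx; case: (lt_total x i) => [//|[e|h]]; exfalso; apply: Yi; exists x => //.
  by right.
by left.
Qed.

Lemma unbounded_uncount (C : set I) : (forall i, exists j, lt i j /\ C j) -> ~ countable C.
Proof.
move=> hC cC; have [i hi] := ord_bounded cC.
have [j [ij Cj]] := hC i; exact: lt_asym ij (hi j Cj).
Qed.

Lemma wf_min (S : set I) : (exists s, S s) -> exists m, S m /\ forall s, S s -> le m s.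
Proof.
move=> [s0 Ss0].
suff : forall a, S a -> exists m, S m /\ forall s, S s -> le m s by move=> H; apply: H Ss0.
apply: (well_founded_ind lt_wf) => a IH Sa.
case: (pselect (exists b, S b /\ lt b a)) => [[b [Sb ba]]|nb].
  exact: IH ba Sb.
exists a; split => // s Ss; apply: not_lt_le => sa; apply: nb; by exists s.
Qed.

End Ord.
Section Proc.
Variables (V : Type) (P : set V -> set (set V) -> (V -> cardv) -> Prop).
Hypothesis Hher : hereditary P.

Definition goodp (Vs' : set V) (E' : set (set V)) (f' : V -> cardv) (x y : V) : Prop :=
  [/\ Vs' x, card_pos (f' x) & [/\ Vs' y, card_pos (f' y), E' [set x; y] &
      holds P Vs' (E' `\ [set x; y]) (fxy f' x y)]].

Definition hpart (Vs' : set V) (E' : set (set V)) (f' : V -> cardv) (x : V) : option V :=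
  match pselect (exists y, goodp Vs' E' f' x y) with
  | left h => Some (proj1_sig (cid h))
  | right _ => None
  end.

Lemma hpartS Vs' E' f' x y : hpart Vs' E' f' x = Some y -> goodp Vs' E' f' x y.
Proof.
rewrite /hpart; case: pselect => // h [<-]; exact: (proj2_sig (cid h)).
Qed.

Lemma hpartN Vs' E' f' x : hpart Vs' E' f' x = None -> ~ exists y, goodp Vs' E' f' x y.
Proof. by rewrite /hpart; case: pselect. Qed.

Definition stt := (set (set V) * (V -> cardv))%type.

Definition nxt (Vs' : set V) (st : stt) (x : V) : stt :=
  match hpart Vs' st.1 st.2 x with
  | Some y => (st.1 `\ [set x; y], fxy st.2 x y)
  | None => st
  end.

Definition run (Vs' : set V) (st : stt) (s : seq V) : stt := foldl (nxt Vs') st s.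

Section Layer.
Variables (Vs' : set V) (st0 : stt) (t : nat -> option V).

Definition tl n := pmap t (iota 0 n).
Definition pst n := run Vs' st0 (tl n).
Definition ed n : option (set V) :=
  match t n with
  | Some x => omap (fun y => [set x; y]) (hpart Vs' (pst n).1 (pst n).2 x)
  | None => None
  end.
Definition FL : set (set V) := [set e | exists n, ed n = Some e].

Lemma tlS n : tl n.+1 = tl n ++ pmap t [:: n].
Proof. by rewrite /tl -addn1 iotaD pmap_cat. Qed.

Lemma pstS n : pst n.+1 = match t n with Some x => nxt Vs' (pst n) x | None => pst n end.
Proof. by rewrite /pst /run tlS foldl_cat /=; case: (t n). Qed.

Lemma pst0 : pst 0 = st0. Proof. by []. Qed.

Lemma ed_spec n e : ed n = Some e ->
  exists x y, [/\ t n = Some x, hpart Vs' (pst n).1 (pst n).2 x = Some y,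
    e = [set x; y], goodp Vs' (pst n).1 (pst n).2 x y &
    pst n.+1 = ((pst n).1 `\ e, fxy (pst n).2 x y)].
Proof.
rewrite /ed pstS; case: (t n) => // x.
case h: hpart => [y|] //= [<-]; exists x, y; split => //.
  exact: hpartS h.
by rewrite /nxt h.
Qed.

Lemma ed_none n : ed n = None -> pst n.+1 = pst n.
Proof.
rewrite /ed pstS; case: (t n) => // x.
by case h: hpart => [y|] //= _; rewrite /nxt h.
Qed.

Lemma pst_sub n : (pst n).1 `<=` st0.1.
Proof.
elim: n => [|n IH] //.
case h: (ed n) => [e|]; last by rewrite ed_none.
have [x [y [_ _ _ _ ->]]] := ed_spec h.
by move=> z /= [/IH].
Qed.

Lemma pst_mono m n : (m <= n)%N -> (pst n).1 `<=` (pst m).1.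
Proof.
elim: n => [|n IH]; first by rewrite leqn0 => /eqP ->.
rewrite leq_eqVlt => /orP [/eqP -> //|]; rewrite ltnS => /IH h.
case he: (ed n) => [e|]; last by rewrite ed_none.
have [x [y [_ _ _ _ ->]]] := ed_spec he.
by move=> z /= [/h].
Qed.

Lemma ed_in n e : ed n = Some e -> (pst n).1 e.
Proof. by move/ed_spec => [x [y [_ _ -> [_ _ [_ _ h _]] _]]]. Qed.

Lemma ed_gone m n e : ed m = Some e -> (m < n)%N -> ~ (pst n).1 e.
Proof.
move=> h mn; have [x [y [_ _ _ _ hs]]] := ed_spec h.
move=> /(pst_mono mn); rewrite hs /= => -[_]; apply; by [].
Qed.

Lemma ed_inj m n e : ed m = Some e -> ed n = Some e -> m = n.
Proof.
move=> hm hn; case: (ltngtP m n) => // h; exfalso.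
  exact: ed_gone hm h (ed_in hn).
exact: ed_gone hn h (ed_in hm).
Qed.

Hypothesis Hst0 : holds P Vs' st0.1 st0.2.

Lemma pst_holds n : holds P Vs' (pst n).1 (pst n).2.
Proof.
elim: n => [|n IH] //.
case h: (ed n) => [e|]; last by rewrite ed_none.
have [x [y [_ _ -> [_ _ [_ _ _ hh]] ->]]] := ed_spec h; exact: hh.
Qed.

Lemma ed_some n x : t n = Some x -> Vs' x -> card_pos ((pst n).2 x) ->
  exists y, ed n = Some [set x; y].
Proof.
move=> tn Vx px.
have [y [Vy py Ey hy]] := Hher (pst_holds n) Vx px.
rewrite /ed tn; case h: hpart => [y'|] /=; first by exists y'.
exfalso; apply: (hpartN h); exists y; by split.
Qed.

Variable v : V.
Definition vst n := exists e, ed n = Some e /\ e v.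
Fixpoint cnt n := if n is m.+1 then cnt m + (if pselect (vst m) then 1 else 0) else 0.

Lemma cnt_mono m n : (m <= n)%N -> (cnt m <= cnt n)%N.
Proof.
elim: n => [|n IH]; first by rewrite leqn0 => /eqP ->.
rewrite leq_eqVlt => /orP [/eqP -> //|]; rewrite ltnS => /IH h /=.
exact: leq_trans h (leq_addr _ _).
Qed.

Definition dec (c : cardv) := match c with CFin n.+1 => CFin n | c => c end.

Lemma fval_step n : ((pst n.+1).2 v = if pselect (vst n) then dec ((pst n).2 v) else (pst n).2 v)
  /\ (vst n -> card_pos ((pst n).2 v)).
Proof.
case: pselect => hv.
  have [e [he ev]] := hv.
  have [x [y [_ _ ee [_ px [_ py _ _]] ->]]] := ed_spec he.
  move: ev; rewrite ee /= => ev.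
  rewrite /fxy asboolT //; split; first by case: ((pst n).2 v) => [[|?]| |].
  by move=> _; case: ev => ->.
case he: (ed n) => [e|]; last by rewrite ed_none.
have [x [y [_ _ ee _ ->]]] := ed_spec he.
rewrite /= /fxy asboolF; first by split => // hh; exfalso; apply: hv.
move=> hxy; apply: hv; exists e; split => //; rewrite ee /=.
by case: hxy => ->; [left|right].
Qed.

Lemma fval_fin k n : st0.2 v = CFin k -> (pst n).2 v = CFin (k - cnt n) /\ (cnt n <= k)%N.
Proof.
move=> h0; elim: n => [|n [IH1 IH2]]; first by rewrite /= subn0 h0.
have [fs fp] := fval_step n.
rewrite fs /=; case: pselect => hv; last by rewrite addn0.
have := fp hv; rewrite IH1 /card_pos => hp.
have hlt : (cnt n < k)%N.
  by rewrite ltnNge; apply/negP => hk; apply: hp; rewrite (eqP (_ : k - cnt n == 0)) // subn_eq0.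
rewrite addn1; split => //.
rewrite /dec; case e: (k - cnt n) => [|j]; first by move: hlt; rewrite -subn_gt0 e.
by congr CFin; rewrite subnS e.
Qed.

Lemma fval_inf n c : st0.2 v = c -> (c = CAleph0 \/ c = CAleph1) -> (pst n).2 v = c.
Proof.
move=> h0 hc; elim: n => [|n IH] //=.
have [fs _] := fval_step n.
by rewrite fs IH; case: pselect => //; case: hc => ->.
Qed.

Definition DN N : set (set V) := [set e | exists m, [/\ (m < N)%N, ed m = Some e & e v]].

Lemma II0 : `I_0 = set0.
Proof. by apply/seteqP; split => x. Qed.

Lemma DN_card N : DN N #= `I_(cnt N).
Proof.
elim: N => [|N IH].
  have -> : DN 0 = set0 by apply/seteqP; split => e // [m []].
  by rewrite II0; apply: card_eq00.
rewrite /=; case: pselect => hv.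
  have [e [he ev]] := hv.
  rewrite addn1; apply/eq_cardSP; exists e.
    by exists N; split.
  suff -> : DN N.+1 `\ e = DN N by [].
  apply/seteqP; split => e'.
    move=> [[m [mN hm ev']] ne]; exists m; split => //.
    rewrite leq_eqVlt in mN; case/orP: mN => [/eqP [] mN|]; last by rewrite ltnS.
    by exfalso; apply: ne; subst; move: hm; rewrite he => -[].
  move=> [m [mN hm ev']]; split; first by exists m; split => //; apply: ltnW.
  move=> /= ee; subst e'; have := ed_inj hm he => mNe; by rewrite mNe ltnn in mN.
rewrite addn0; suff -> : DN N.+1 = DN N by [].
apply/seteqP; split => e' [m [mN hm ev']]; exists m; split => //; last by apply: ltnW.
rewrite leq_eqVlt in mN; case/orP: mN => [/eqP [] mN|]; last by rewrite ltnS.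
by exfalso; apply: hv; subst; exists e'.
Qed.

Definition deg_task := forall M, exists n, (M <= n)%N /\ t n = Some v.

Lemma cnt_unb_fin k j : Vs' v -> deg_task -> st0.2 v = CFin k -> (j <= k)%N ->
  exists N, (j <= cnt N)%N.
Proof.
move=> Vv dt h0; elim: j => [|j IH] hj; first by exists 0.
have [N hN] := IH (ltnW hj).
case: (ltnP j (cnt N)) => hc; first by exists N.
have [n [Nn tn]] := dt N.
case: (ltnP j (cnt n)) => hc2; first by exists n.
have cn : cnt n = j by apply/eqP; rewrite eqn_leq hc2 (leq_trans hN (cnt_mono Nn)).
have [fv _] := fval_fin n h0.
have [y hy] : exists y, ed n = Some [set v; y].
  apply: ed_some tn Vv _; rewrite fv cn /card_pos => -[] /eqP; by rewrite subn_eq0 leqNgt hj.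
exists n.+1 => /=; case: pselect => hv; first by rewrite cn addn1.
by exfalso; apply: hv; exists [set v; y]; split => //=; left.
Qed.

Lemma deg_fin k : Vs' v -> deg_task -> st0.2 v = CFin k ->
  [set e | FL e /\ e v] #= `I_k.
Proof.
move=> Vv dt h0.
have [N hN] := cnt_unb_fin Vv dt h0 (leqnn k).
have cN : cnt N = k by apply/eqP; rewrite eqn_leq hN (fval_fin N h0).2.
suff -> : [set e | FL e /\ e v] = DN N by rewrite -cN; apply: DN_card.
apply/seteqP; split => e.
  move=> [[n hn] ev]; exists n; split => //.
  rewrite ltnNge; apply/negP => Nn.
  have := (fval_fin n.+1 h0).2 => /=; case: pselect => hv; last by move=> _; apply: hv; exists e.
  have := cnt_mono Nn; rewrite cN /=; lia.
by move=> [m [_ hm ev]]; split => //; exists m.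
Qed.

Lemma deg_aleph0 : Vs' v -> deg_task -> st0.2 v = CAleph0 ->
  [set e | FL e /\ e v] #= [set: nat].
Proof.
move=> Vv dt h0.
have unb : forall j, exists N, (j <= cnt N)%N.
  elim => [|j [N hN]]; first by exists 0.
  have [n [Nn tn]] := dt N.
  have [y hy] : exists y, ed n = Some [set v; y].
    by apply: ed_some tn Vv _; rewrite (fval_inf n h0) //; left.
  exists n.+1 => /=; case: pselect => hv; last first.
    by exfalso; apply: hv; exists [set v; y]; split => //=; left.
  by rewrite addn1 ltnS (leq_trans hN (cnt_mono Nn)).
apply: eq_card_nat.
  apply: (countable_sub (B := (fun n => odflt set0 (ed n)) @` [set: nat])).
    by move=> e [[n hn] _]; exists n => //; rewrite hn.
  by apply: countable_image.
move=> [m hm].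
have [N hN] := unb m.+1.
have : DN N #<= `I_m.
  move: hm; rewrite card_eq_le => /andP [hm _].
  apply: card_le_trans hm.
  apply: subset_card_le => e [n [_ hn ev]]; split => //; by exists n.
rewrite (card_le_eql (DN_card N)) card_le_II => hc.
by move: (leq_trans hN hc); rewrite ltnn.
Qed.

End Layer.
End Proc.
Lemma Forall_pmap (T U : Type) (D : set U) (t : T -> option U) (s : seq T) :
  (forall n x, t n = Some x -> D x) -> List.Forall D (pmap t s).
Proof.
move=> h; elim: s => [|a s IH] //=.
by case ha: (t a) => [x|] //=; constructor => //; exact: h ha.
Qed.

Lemma Forall_sub (T : Type) (D D' : set T) s : D `<=` D' -> List.Forall D s -> List.Forall D' s.
Proof. by move=> h; elim => // x l Dx _ IH; constructor => //; apply: h. Qed.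

Lemma countable_opt (T : Type) (o : option T) : countable [set y | o = Some y].
Proof.
case: o => [y|].
  apply: (countable_sub (B := [set y])); last exact: countable1.
  by move=> z [<-].
apply: (countable_sub (B := set0)) => //.
Qed.

Lemma countable_seqs (T : Type) (Y : set T) : countable Y -> countable [set s | List.Forall Y s].
Proof.
move=> /countable_injP [g gi]; apply/countable_injP.
exists (fun s => pickle (map g s)) => s1 s2.
rewrite !inE => h1 h2 /(pcan_inj pickleK_inv).
elim: s1 s2 h1 h2 => [|a s1 IH] [|b s2] //= h1 h2 [] hab hs.
inversion h1; inversion h2; subst.
rewrite (gi a b) ?inE // (IH s2) //.
Qed.

Section Constr.
Variables (V : Type) (Vs : set V) (E : set (set V)) (f : V -> cardv)
  (P : set V -> set (set V) -> (V -> cardv) -> Prop).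

Definition partnerA (A : set V) (s : seq V) (x : V) : option V :=
  let st := run P (V_alpha Vs f A) (E_alpha Vs E f A, f) s in
  hpart P (V_alpha Vs f A) st.1 st.2 x.

Definition cstep (S : set (set V)) (Y : set V) : set V :=
  Y `|` [set y | exists A s x, [/\ S A, List.Forall Y s, Y x & partnerA A s x = Some y]].

Definition clos (S : set (set V)) (X : set V) : set V :=
  \bigcup_(n in [set: nat]) iter n (cstep S) X.

Lemma iter_mono S X m n : (m <= n)%N -> iter m (cstep S) X `<=` iter n (cstep S) X.
Proof.
elim: n => [|n IH]; first by rewrite leqn0 => /eqP ->.
rewrite leq_eqVlt => /orP [/eqP -> //|]; rewrite ltnS => /IH h z /h hz /=; by left.
Qed.

Lemma clos_sub S X : X `<=` clos S X.
Proof. by move=> z hz; exists 0. Qed.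

Lemma clos_closed S X A s x y : S A -> List.Forall (clos S X) s -> clos S X x ->
  partnerA A s x = Some y -> clos S X y.
Proof.
move=> SA hs [n _ hx] hp.
have [N [hN nN]] : exists N, List.Forall (iter N (cstep S) X) s /\ (n <= N)%N.
  clear hp; elim: s hs => [|a s IH] hs; first by exists n.
  inversion hs as [|a' s' ha hs']; subst.
  have [N [hN nN]] := IH hs'; case: ha => m _ hm.
  exists (maxn N m); split; last by apply: leq_trans nN (leq_maxl _ _).
  constructor; first by apply: (iter_mono (leq_maxr N m)).
  by apply: Forall_sub hN; apply: iter_mono; apply: leq_maxl.
exists N.+1 => //=; right; exists A, s, x; split => //.
exact: (iter_mono nN).
Qed.

Lemma clos_min S X (Z : set V) : X `<=` Z ->
  (forall A s x y, S A -> List.Forall Z s -> Z x -> partnerA A s x = Some y -> Z y) ->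
  clos S X `<=` Z.
Proof.
move=> XZ hZ z [n _]; elim: n z => [|n IH] z //=; first by apply: XZ.
case; first by apply: IH.
move=> [A [s [x [SA hs hx hp]]]]; apply: hZ hp => //; last by apply: IH.
by apply: Forall_sub hs.
Qed.

Lemma clos_count S X : countable S -> countable X -> countable (clos S X).
Proof.
move=> cS cX; apply: bigcup_countable => // n _.
elim: n => [|n IH] //=.
apply: countableU => //.
apply: (countable_sub (B := \bigcup_(A in S) \bigcup_(p in [set s | List.Forall (iter n (cstep S) X) s] `*` iter n (cstep S) X)
   [set y | partnerA A p.1 p.2 = Some y])).
  by move=> y [A [s [x [SA hs hx hp]]]]; exists A => //; exists (s, x).
apply: bigcup_countable => // A _; apply: bigcup_countable.
  by apply: countableX => //; apply: countable_seqs.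
by move=> p _; apply: countable_opt.
Qed.

Lemma partner_in A s x y : partnerA A s x = Some y -> V_alpha Vs f A y.
Proof. by rewrite /partnerA => h; have [_ _ [hy _ _ _]] := hpartS h. Qed.

Lemma V_alpha_sub A : V_alpha Vs f A `<=` Vs.
Proof. by move=> z [[]|[]]. Qed.

Lemma clos_Vs S X : X `<=` Vs -> clos S X `<=` Vs.
Proof.
move=> XV; apply: clos_min => // A s x y _ _ _ /partner_in; apply: V_alpha_sub.
Qed.

Variables (I : Type) (lt : I -> I -> Prop).
Hypothesis Hlt : omega1_order lt.
Variable e : I -> V.
Hypothesis eVs : forall i, Vs (e i).
Hypothesis eonto : forall v, Vs v -> exists i, e i = v.

Definition FA (a : I) (r : forall b, lt b a -> set V) : set V :=
  clos ([set set0] `|` [set B | exists b (p : lt b a), B = r b p])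
       [set z | exists b (p : lt b a), r b p z \/ z = e b].

Definition Aset : I -> set V := Fix (lt_wf Hlt) (fun _ => set V) FA.

Definition Sa a := [set set0] `|` [set B | exists b, lt b a /\ B = Aset b].
Definition Xa a := [set z | exists b, lt b a /\ (Aset b z \/ z = e b)].

Lemma Aset_eq a : Aset a = clos (Sa a) (Xa a).
Proof.
rewrite /Aset Fix_eq; last first.
  move=> x g h hgh; have -> // : g = h.
  by apply: functional_extensionality_dep => b; apply: functional_extensionality_dep => p.
rewrite /FA; congr clos.
  apply/seteqP; split => B [->|]; try by left.
    by move=> [b [p ->]]; right; exists b; split.
  by move=> [b [p ->]]; right; exists b, p.
apply/seteqP; split => z.
  by move=> [b [p h]]; exists b.
by move=> [b [p h]]; exists b, p.
Qed.

Lemma Aset_count a : countable (Aset a).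
Proof.
elim/(well_founded_ind (lt_wf Hlt)): a => a IH.
rewrite Aset_eq; apply: clos_count.
  apply: countableU; first exact: countable1.
  apply: (countable_sub (B := Aset @` [set b | lt b a])).
    by move=> B [b [ba ->]]; exists b.
  apply: countable_image; exact: seg_count Hlt a.
apply: (countable_sub (B := \bigcup_(b in [set b | lt b a]) (Aset b `|` [set e b]))).
  move=> z [b [ba h]]; exists b; first done.
  by case: h => h; [left|right].
apply: bigcup_countable; first exact: seg_count Hlt a.
by move=> b ba; apply: countableU; [apply: IH|apply: countable1].
Qed.

Lemma Aset_Vs a : Aset a `<=` Vs.
Proof.
elim/(well_founded_ind (lt_wf Hlt)): a => a IH.
rewrite Aset_eq; apply: clos_Vs.
by move=> z [b [ba [h|->]]]; [apply: (IH b)|].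
Qed.

Lemma Aset_mono a b : lt b a -> Aset b `<=` Aset a.
Proof.
move=> ba z hz; rewrite Aset_eq; apply: clos_sub; exists b; split => //; by left.
Qed.

Lemma Aset_monole a b : le lt b a -> Aset b `<=` Aset a.
Proof. by case=> [/Aset_mono|->]. Qed.

Lemma Aset_e a b : lt b a -> Aset a (e b).
Proof. by move=> ba; rewrite Aset_eq; apply: clos_sub; exists b; split => //; right. Qed.

Lemma Aset_closed a A s x y : (A = set0 \/ exists g, lt g a /\ A = Aset g) ->
  List.Forall (Aset a) s -> Aset a x -> partnerA A s x = Some y -> Aset a y.
Proof.
rewrite Aset_eq => hA; apply: clos_closed.
by case: hA => [->|[g [ga ->]]]; [left|right; exists g].
Qed.

Lemma up_comb l (Q1 Q2 : I -> Prop) :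
  (forall b b', Q1 b -> lt b b' -> Q1 b') -> (forall b b', Q2 b -> lt b b' -> Q2 b') ->
  (exists b, lt b l /\ Q1 b) -> (exists b, lt b l /\ Q2 b) -> exists b, [/\ lt b l, Q1 b & Q2 b].
Proof.
move=> u1 u2 [b1 [l1 q1]] [b2 [l2 q2]].
case: (lt_total Hlt b1 b2) => [h|[hh|h]].
- by exists b2; split => //; apply: u1 h.
- by subst; exists b2.
- by exists b1; split => //; apply: u2 h.
Qed.

Lemma Aset_cont l : is_limit lt l -> Aset l = \bigcup_(a in [set a | lt a l]) Aset a.
Proof.
move=> [[j jl] hl]; apply/seteqP; split; last first.
  by move=> z [a al hz]; apply: Aset_mono al _ hz.
rewrite {1}Aset_eq; apply: clos_min.
  move=> z [b [bl [h|->]]]; first by exists b.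
  by have [k [bk kl]] := hl b bl; exists k => //; apply: Aset_e.
move=> A s x y SA hs hx hp.
have uA : forall b b', Aset b x -> lt b b' -> Aset b' x by move=> b b' h bb; apply: Aset_mono bb _ h.
have [b1 [l1 Fb1 xb1]] : exists b, [/\ lt b l, List.Forall (Aset b) s & Aset b x].
  apply: up_comb; last by case: hx => b bl h; exists b.
    move=> b b' h bb; apply: Forall_sub h; exact: Aset_mono.
    exact: uA.
  elim: s hs {hp} => [|a s IH] hs; first by exists j.
  inversion hs as [|a' s' ha hs']; subst.
  have hF : forall b b', List.Forall (Aset b) s -> lt b b' -> List.Forall (Aset b') s.
    by move=> b b' h bb; apply: Forall_sub h; apply: Aset_mono.
  have ha' : exists b, lt b l /\ Aset b a by case: ha => b0 bl0 h0; exists b0.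
  have [b [bl h1 h2]] := up_comb (Q1 := fun b => Aset b a) (Q2 := fun b => List.Forall (Aset b) s)
     (fun b b' h bb => Aset_mono bb h) hF ha' (IH hs').
  by exists b; split => //; constructor.
move: hp; case: SA => [->|[g [gl ->]]] hp.
  exists b1 => //; apply: (Aset_closed (A := set0) _ Fb1 xb1 hp); by left.
have hg : exists b, lt b l /\ lt g b by have [k [gk kl]] := hl g gl; exists k.
have [b [bl h1 h2]] := up_comb (Q1 := fun b => lt g b)
   (Q2 := fun b => List.Forall (Aset b) s /\ Aset b x)
   (fun b b' h bb => lt_trans Hlt h bb)
   (fun b b' h bb => conj (Forall_sub (Aset_mono bb) h.1) (Aset_mono bb h.2))
   hg (ex_intro _ b1 (conj l1 (conj Fb1 xb1))).
exists b => //; apply: (Aset_closed _ h2.1 h2.2 hp); right; by exists g.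
Qed.

Lemma Aset_cover : Vs = \bigcup_(a in [set: I]) Aset a.
Proof.
apply/seteqP; split => v.
  move=> /eonto [i <-].
  have [k hk] := ord_bounded Hlt (countable1 i).
  by exists k => //; apply: Aset_e; apply: hk.
by move=> [a _ h]; apply: Aset_Vs h.
Qed.

Lemma Aset_filtration : filtration Vs lt Aset.
Proof.
split.
- exact: Aset_Vs.
- by move=> a b ab; apply: Aset_mono.
- exact: Aset_cont.
- exact: Aset_count.
- exact: Aset_cover.
Qed.

End Constr.
Lemma aleph1_of (T I : Type) (lt : I -> I -> Prop) (S : set T) (h0 : T -> I) :
  omega1_order lt -> ~ countable S -> {in S &, injective h0} -> has_card S CAleph1.
Proof.
move=> Hlt nc h0i.
pose h (j : S) : I := h0 (val j).
have hi : injective h.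
  move=> a b e; apply: val_inj; exact: (h0i _ _ (valP a) (valP b) e).
exists S, (fun a b => lt (h a) (h b)); split; last by apply: card_setT_sym.
split; first split.
- move=> a; exact: (lt_irr Hlt).
- move=> a b c; exact: (lt_trans Hlt).
- move=> a b; case: (lt_total Hlt (h a) (h b)) => [|[/hi ->|]]; [left|right; left|right; right] => //.
- exact: wf_inverse_image (lt_wf Hlt).
split.
  by rewrite (eq_countable (card_setT S)).
move=> i; have /countable_injP [k ki] := seg_count Hlt (h i).
apply/countable_injP; exists (fun j => k (h j)) => a b; rewrite !inE => ha hb /ki.
by rewrite !inE => /(_ ha hb) /hi.
Qed.
Lemma tasks_ex (V : Type) (D : set V) : countable D ->
  exists t : nat -> option V, (forall n x, t n = Some x -> D x) /\
    (forall v, D v -> forall M, exists n, (M <= n)%N /\ t n = Some v).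
Proof.
move=> /countable_injP [g gi].
pose dec i := match pselect (exists v, D v /\ g v = i) with
  | left h => Some (proj1_sig (cid h)) | right _ => None end.
have decS i x : dec i = Some x -> D x /\ g x = i.
  rewrite /dec; case: pselect => // h [<-]; exact: (proj2_sig (cid h)).
exists (fun n => dec (Cantor.of_nat n).1); split.
  by move=> n x /decS [].
move=> v Dv M; exists (Cantor.to_nat (g v, M)); split.
  have := Cantor.to_nat_non_decreasing (g v) M; lia.
rewrite Cantor.cancel_of_to /=.
rewrite /dec; case: pselect => [h|]; last by move=> nh; exfalso; apply: nh; exists v.
congr Some; have [Dw gw] := proj2_sig (cid h).
by apply: gi; rewrite ?inE.
Qed.

Section Main.
Variables (V : Type) (Vs : set V) (E : set (set V)) (f : V -> cardv)
  (P : set V -> set (set V) -> (V -> cardv) -> Prop).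
Hypothesis hher : hereditary P.
Hypothesis hhold : holds P Vs E f.
Variables (I : Type) (lt : I -> I -> Prop).
Hypothesis Hlt : omega1_order lt.
Variable e : I -> V.
Hypothesis eVs : forall i, Vs (e i).
Hypothesis eonto : forall v, Vs v -> exists i, e i = v.
Variable C : set I.
Hypothesis hC : club lt C.

Definition AA := Aset Vs E f P Hlt e.

Hypothesis hCP : forall a, C a -> holds P (V_alpha Vs f (AA a)) (E_alpha Vs E f (AA a)) f.

Lemma Vs_ne : exists v, Vs v.
Proof. by case: hhold => [[[[v Vv] _] _] _]; exists v. Qed.

Lemma C_ne : exists c, C c.
Proof.
have [v Vv] := Vs_ne; have [i _] := eonto Vv.
by have [j [_ Cj]] := hC.1 i; exists j.
Qed.

Definition c0 : I := proj1_sig (cid (wf_min Hlt C_ne)).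
Lemma c0P : C c0 /\ forall s, C s -> le lt c0 s.
Proof. exact: (proj2_sig (cid (wf_min Hlt C_ne))). Qed.

Lemma nx_ne g : exists s, C s /\ lt g s.
Proof. by have [j [gj Cj]] := hC.1 g; exists j. Qed.

Definition nx (g : I) : I := proj1_sig (cid (wf_min Hlt (nx_ne g))).
Lemma nxP g : (C (nx g) /\ lt g (nx g)) /\ forall s, C s /\ lt g s -> le lt (nx g) s.
Proof. exact: (proj2_sig (cid (wf_min Hlt (nx_ne g)))). Qed.

Definition start (l : option I) : set V := if l is Some g then AA g else set0.
Definition endI (l : option I) : I := if l is Some g then nx g else c0.
Definition endD l := AA (endI l).
Definition LI : set (option I) := [set l | if l is Some g then C g else True].

Lemma V_alpha0 : V_alpha Vs f set0 = Vs.
Proof.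
apply/seteqP; split => x; first by apply: V_alpha_sub.
by move=> Vx; left; split.
Qed.

Lemma E_alpha0 : E_alpha Vs E f set0 = E.
Proof.
apply/seteqP; split => e0; first by case.
move=> Ee; split => //.
have [x [y [Vx Vy _ ->]]] := hhold.1.1.2 e0 Ee.
by exists x, y; rewrite V_alpha0; split => //; split.
Qed.

Lemma start_holds l : LI l -> holds P (V_alpha Vs f (start l)) (E_alpha Vs E f (start l)) f.
Proof.
case: l => [g|] /= h; first exact: hCP.
by rewrite V_alpha0 E_alpha0.
Qed.

Lemma start_ok l : start l = set0 \/ exists g, lt g (endI l) /\ start l = AA g.
Proof. case: l => [g|] /=; last by left. by right; exists g; split => //; case: (nxP g) => -[]. Qed.

Lemma endI_C l : C (endI l).
Proof. case: l => [g|] /=; [by case: (nxP g) => -[]| exact: c0P.1]. Qed.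

Definition tkP (l : option I) :=
  (exists t : nat -> option V, (forall n x, t n = Some x -> endD l x) /\
    (forall v, endD l v -> forall M, exists n, (M <= n)%N /\ t n = Some v)).

Lemma tk_ex l : tkP l.
Proof. by apply: tasks_ex; apply: Aset_count. Qed.

Definition tk l : nat -> option V := proj1_sig (cid (tk_ex l)).
Lemma tk_in l n x : tk l n = Some x -> endD l x.
Proof. exact: (proj2_sig (cid (tk_ex l))).1. Qed.
Lemma tk_inf l v : endD l v -> forall M, exists n, (M <= n)%N /\ tk l n = Some v.
Proof. exact: (proj2_sig (cid (tk_ex l))).2. Qed.

Definition Vsl l := V_alpha Vs f (start l).
Definition st0l l : stt V := (E_alpha Vs E f (start l), f).
Definition FLl l := FL P (Vsl l) (st0l l) (tk l).
Definition edl l := ed P (Vsl l) (st0l l) (tk l).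

Definition FF : set (set V) := \bigcup_(l in LI) FLl l.

Lemma edge_facts l e0 : FLl l e0 ->
  exists x y, [/\ e0 = [set x; y], endD l x, endD l y, Vsl l x /\ Vsl l y & E_alpha Vs E f (start l) e0].
Proof.
move=> [n hn].
have [x [y [tn hp ee [Vx _ [Vy _ _ _]] _]]] := ed_spec hn.
exists x, y; split => //.
- exact: tk_in tn.
- apply: (Aset_closed (start_ok l) _ (tk_in tn) hp).
  apply: Forall_pmap => m z; exact: tk_in.
- by apply: (pst_sub (ed_in hn)).
Qed.

Lemma FF_E : FF `<=` E.
Proof. by move=> e0 [l _ /edge_facts [x [y [_ _ _ _ []]]]]. Qed.


Lemma AA_le a b : le lt b a -> AA b `<=` AA a.
Proof. exact: Aset_monole. Qed.

Lemma AA_cover v : Vs v -> exists b, AA b v.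
Proof. by rewrite (Aset_cover E f P Hlt eVs eonto) => -[b _ h]; exists b. Qed.

Lemma layer v : Vs v -> exists l, [/\ LI l, endD l v, ~ start l v &
   forall l', LI l' -> l' <> l -> ~ endD l' v \/ start l' v].
Proof.
move=> Vv.
case: (pselect (AA c0 v)) => h0.
  exists None; split => //.
  move=> [g|] // Cg _; right => /=; exact: (AA_le (c0P.2 g Cg)) h0.
pose M := [set c | C c /\ ~ AA c v].
have Mc0 : M c0 := conj c0P.1 h0.
have [b Ab] := AA_cover Vv.
have Mb : forall c, M c -> lt c b.
  move=> c [Cc nc]; apply: contrapT => ncb; apply: nc.
  exact: (AA_le (not_lt_le Hlt ncb)) Ab.
pose U := [set u | forall c, M c -> le lt c u].
have [s [Us smin]] := wf_min Hlt (ex_intro U b (fun c Mc => or_introl (Mb c Mc))).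
have below : ~ M s -> forall j, lt j s -> exists c, [/\ M c, lt j c & lt c s].
  move=> nMs j js.
  have nUj : ~ U j.
    move=> Uj; have h1 := smin j Uj; have h2 := lt_not_le Hlt js. exact: h2 h1.
  have [c [Mc ncj]] : exists c, M c /\ ~ le lt c j.
    apply: contrapT => hn; apply: nUj => c Mc; apply: contrapT => ncj; apply: hn; by exists c.
  exists c; split => //.
    case: (lt_total Hlt j c) => [//|[ee|cj]]; exfalso; apply: ncj; [by right|by left].
  case: (Us c Mc) => // ee; by subst.
have Ms : M s.
  apply: contrapT => nMs.
  have hls : is_limit lt s.
    split; last by move=> j js; have [c [_ jc cs]] := below nMs j js; exists c.
    exists c0; case: (Us c0 Mc0) => // ee; by subst.
  have Cs : C s.
    apply: (hC.2 s hls) => j js; have [c [[Cc _] jc cs]] := below nMs j js; by exists c; split.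
  have As : AA s v by apply: contrapT => nv; apply: nMs.
  move: As; rewrite /AA (Aset_cont Vs E f P Hlt e hls) => -[a als Aa].
  have [c [[Cc nc] ac _]] := below nMs a als.
  by apply: nc; apply: (AA_le (or_introl ac)).
have [[Cnx snx] nxmin] := nxP s.
have En : endD (Some s) v.
  apply: contrapT => nv; exact: (lt_not_le Hlt snx) (Us (nx s) (conj Cnx nv)).
exists (Some s); split => //; first exact: Ms.1.
  exact: Ms.2.
move=> [g|] Lg ne.
  case: (lt_total Hlt g s) => [gs|[ee|sg]]; last first.
  - right => /=; exact: (AA_le (nxmin g (conj Lg sg))) En.
  - by subst.
  - left => /= hv; apply: Ms.2; exact: (AA_le ((nxP g).2 s (conj Ms.1 gs))) hv.
left => /= hv; apply: Ms.2; exact: (AA_le (c0P.2 s Ms.1)) hv.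
Qed.


Lemma set2_mem (x y z : V) : [set x; y] z <-> z = x \/ z = y.
Proof. by []. Qed.

Lemma deg_layer v : Vs v -> f v <> CAleph1 ->
  exists l, [/\ LI l, deg FF v = [set e0 | FLl l e0 /\ e0 v], endD l v & Vsl l v].
Proof.
move=> Vv fv; have [l [Ll El nS hl]] := layer Vv.
exists l; split => //; last by left; split.
apply/seteqP; split => e0; last by move=> [h ev]; split => //; exists l.
move=> [[l' Ll' h'] ev]; split => //.
case: (pselect (l' = l)) => [<- //|ne].
have [x [y [ee Ex Ey [Vx Vy] _]]] := edge_facts h'.
have [Ev Vv'] : endD l' v /\ Vsl l' v.
  by move: ev; rewrite ee => -[] ->.
exfalso; case: (hl l' Ll' ne) => // hs.
by case: Vv' => -[_ //] [_ /= hf].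
Qed.

Lemma deg_not1 v : Vs v -> f v <> CAleph1 -> has_card (deg FF v) (f v).
Proof.
move=> Vv fv; have [l [Ll -> El Vl]] := deg_layer Vv fv.
have dt : deg_task (tk l) v by move=> M; apply: tk_inf.
move: fv; case hf: (f v) => [k| |] // _.
  exact: (@deg_fin _ _ hher (Vsl l) (st0l l) (tk l) (start_holds Ll) v k Vl dt hf).
exact: (@deg_aleph0 _ _ hher (Vsl l) (st0l l) (tk l) (start_holds Ll) v Vl dt hf).
Qed.

Section Aleph1.
Variable v : V.
Hypothesis Vv : Vs v.
Hypothesis fv : f v = CAleph1.

Definition espec g y := [/\ FLl (Some g) [set v; y], ~ AA g y & endD (Some g) y].

Lemma espec_ex g : C g -> AA g v -> exists y, espec g y.
Proof.
move=> Cg Av.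
have [[Cnx gnx] _] := nxP g.
have Ev : endD (Some g) v by apply: (AA_le (or_introl gnx)).
have [n [_ tn]] := tk_inf Ev 0.
have Vl : Vsl (Some g) v by right; split.
have hs := start_holds (Cg : LI (Some g)).
have pv : card_pos ((pst P (Vsl (Some g)) (st0l (Some g)) (tk (Some g)) n).2 v).
  by rewrite (@fval_inf _ P (Vsl (Some g)) (st0l (Some g)) (tk (Some g)) v n CAleph1 fv) //; right.
have [y hy] := @ed_some _ _ hher (Vsl (Some g)) (st0l (Some g)) (tk (Some g)) hs n v tn Vl pv.
have FLv : FLl (Some g) [set v; y] by exists n.
exists y; split => //.
  have [x1 [y1 [_ _ _ _ [_ [x'' [y'' [ee _ [_ ny]]]]]]]] := edge_facts FLv.
  have : [set v; y] y'' by rewrite ee; right.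
  by case => e1; rewrite e1 in ny => //; exfalso; apply: ny.
have [x' [y' [ee Ex Ey _ _]]] := edge_facts FLv.
have : [set x'; y'] y by rewrite -ee; right.
by case => ->.
Qed.


Definition eg (g : I) : set V :=
  match pselect (exists y, espec g y) with
  | left h => [set v; proj1_sig (cid h)]
  | right _ => set0
  end.

Definition Cv := [set g | C g /\ AA g v].

Lemma egP g : Cv g -> exists y, eg g = [set v; y] /\ espec g y.
Proof.
move=> [Cg Av]; rewrite /eg; case: pselect => [h|]; last by move=> nh; exfalso; apply: nh; apply: espec_ex.
by exists (proj1_sig (cid h)); split => //; exact: (proj2_sig (cid h)).
Qed.

Lemma eg_neq g1 g2 : Cv g1 -> Cv g2 -> lt g1 g2 -> eg g1 <> eg g2.
Proof.
move=> h1 h2 g12; have [y1 [-> [_ n1 E1]]] := egP h1; have [y2 [-> [_ n2 E2]]] := egP h2.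
move=> ee.
have : [set v; y2] y1 by rewrite -ee; right.
case => e1.
  by apply: n1; rewrite e1; exact: h1.2.
apply: n2; rewrite -e1.
have Cg2 := h2.1.
exact: (AA_le ((nxP g1).2 g2 (conj Cg2 g12))) E1.
Qed.

Lemma eg_inj : {in Cv &, injective eg}.
Proof.
move=> g1 g2; rewrite !inE => h1 h2 ee.
case: (lt_total Hlt g1 g2) => [g12|[//|g21]]; exfalso.
  exact: eg_neq h1 h2 g12 ee.
exact: eg_neq h2 h1 g21 (esym ee).
Qed.

Lemma eg_FF g : Cv g -> deg FF v (eg g).
Proof.
move=> h; have [y [-> [hF _ _]]] := egP h.
split; last by left.
by exists (Some g) => //; exact: h.1.
Qed.

Lemma Cv_uncount : ~ countable Cv.
Proof.
move=> cC; have [b Ab] := AA_cover Vv.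
apply: (unbounded_uncount Hlt hC.1).
apply: (countable_sub (B := Cv `|` [set g | lt g b])); last first.
  by apply: countableU => //; apply: seg_count Hlt b.
move=> g Cg; case: (pselect (lt g b)) => gb; first by right.
left; split => //; exact: (AA_le (not_lt_le Hlt gb)) Ab.
Qed.

Lemma deg_uncount : ~ countable (deg FF v).
Proof.
move=> cd; apply: Cv_uncount.
have ce : countable (eg @` Cv).
  by apply: (countable_sub (B := deg FF v)) => // _ [g h <-]; apply: eg_FF.
by rewrite -(eq_countable (inj_card_eq eg_inj)).
Qed.

Definition oth (e0 : set V) : V :=
  match pselect (exists w, Vs w /\ e0 = [set v; w]) with
  | left h => proj1_sig (cid h)
  | right _ => v
  end.

Lemma othP e0 : deg FF v e0 -> Vs (oth e0) /\ e0 = [set v; oth e0].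
Proof.
move=> [/FF_E Ee ev]; rewrite /oth; case: pselect => [h|nh]; first exact: (proj2_sig (cid h)).
exfalso; apply: nh.
have [x [y [Vx Vy _ ee]]] := hhold.1.1.2 e0 Ee.
move: ev; rewrite ee => -[] ->.
  by exists y.
by exists x; split => //; exact: setUC.
Qed.

Definition rI (w : V) : I :=
  match pselect (exists i, e i = w) with
  | left h => proj1_sig (cid h)
  | right _ => c0
  end.

Lemma rIK w : Vs w -> e (rI w) = w.
Proof.
move=> Vw; rewrite /rI; case: pselect => [h|nh]; first exact: (proj2_sig (cid h)).
by exfalso; apply: nh; apply: eonto.
Qed.

Lemma deg_aleph1 : has_card (deg FF v) CAleph1.
Proof.
apply: (aleph1_of (h0 := fun e0 => rI (oth e0)) Hlt deg_uncount).
move=> e1 e2; rewrite !inE => h1 h2 ee.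
have [V1 E1] := othP h1; have [V2 E2] := othP h2.
rewrite E1 E2; congr [set v; _].
by rewrite -(rIK V1) -(rIK V2) ee.
Qed.

End Aleph1.

Lemma main_perfect : exists F, perfect_f_factor Vs E f F.
Proof.
exists FF.
have hc : forall x, Vs x -> has_card (deg FF x) (f x).
  move=> x Vx; case: (pselect (f x = CAleph1)) => fx.
    by rewrite fx; apply: deg_aleph1.
  exact: deg_not1.
split => //; split; first exact: FF_E.
move=> x Vx; exists (set V), (deg FF x); split; first exact: hc.
exact: card_lexx.
Qed.

End Main.

Theorem theorem2 (V : Type) (Vs : set V) (E : set (set V)) (f : V -> cardv)
  (P : set V -> set (set V) -> (V -> cardv) -> Prop) :
  is_property P -> hereditary P ->
  has_card Vs CAleph1 ->
  holds P Vs E f ->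
  ~ destructed P Vs E f ->
  exists F : set (set V), perfect_f_factor Vs E f F.
Proof.
move=> _ hher [I [lt [Hlt hVI]]] hhold hnd.
have /card_bijP [F [G FG GF]] := card_esym hVI.
pose e (i : I) : V := val (F (@exist _ _ i (mem_set (Logic.I : [set: I] i)))).
have eVs : forall i, Vs (e i) by move=> i; exact: set_valP.
have eonto : forall v, Vs v -> exists i, e i = v.
  move=> v Vv; pose w : Vs := exist _ v (mem_set Vv).
  exists (val (G w)); rewrite /e.
  have -> : @exist _ _ (val (G w)) (mem_set (Logic.I : [set: I] (val (G w)))) = G w.
    by apply: val_inj.
  by rewrite GF.
have [C [hC hCP]] : exists C, club lt C /\
    forall a, C a -> holds P (V_alpha Vs f (Aset Vs E f P Hlt e a)) (E_alpha Vs E f (Aset Vs E f P Hlt e a)) f.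
  apply: contrapT => hn; apply: hnd; exists I, lt, (Aset Vs E f P Hlt e); split => //; split.
    exact: Aset_filtration.
  move=> C hC; apply: contrapT => hne; apply: hn; exists C; split => // a Ca.
  by apply: contrapT => hna; apply: hne; exists a.
exact: (main_perfect hher hhold eVs eonto hC hCP).
Qed.
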